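(* Let $\boldsymbol{\mathcal{G}}=(\mathcal{V},\boldsymbol{\mathcal{E}},\mu(\cdot))$ be a stochastic digraph with vertex set $\mathbb{Z}_n$, edge sets $\mathcal{E}_1,\dots,\mathcal{E}_h$, and out-neighborhood map $H(x,w)=\{y:(x,y)\in\mathcal{E}_w\}$, such that there is no pair $(i,w)\in\mathbb{Z}_n\times\mathbb{Z}_h$ with $\mu(\{w\})>0$ and $H(i,w)=\emptyset$. Let $\mathcal{Q}\subset\mathbb{Z}_n$ and let $\check{\boldsymbol{\mathcal{G}}}$ be the augmented stochastic digraph on $\mathbb{Z}_{n+2}$ (with the same $\mu$) obtained by replacing, in each $\mathcal{E}_s$, every edge $(i,j)$ with $j\in\mathcal{Q}$ by the edge $(i,n+1)$, and adding the edges $(n+1,n+2)$ and $(n+2,n+2)$ to each $\mathcal{E}_s$. Let $\check H$ be its out-neighborhood map and consider the Markov decision process on states $\mathbb{Z}_{n+2}$ with action space $\mathcal{A}(i)$ at state $i$ equal to the set of tuples $a=(\xi_{1,a},\dots,\xi_{h,a})$ with $\xi_{w,a}\in\check H(i,w)$ for each $w$, transition probabilities $$\check p(j\mid i,a)=\sum_{w\in\{s\in\mathbb{Z}_h:\,\xi_{s,a}=j\}}\mu(\{w\}),$$ and reward $r(i,a,j)=-\mathbb{I}_{\{n+1\}}(j)$. Let $v_\star$ be the optimal state-value function of this MDP, i.e., $v_\star(0,x)=0$ and $v_\star(k,x)=\max_{a\in\mathcal{A}(x)}\sum_{j}\check p(j\mid x,a)\big(r(x,a,j)+v_\star(k-1,j)\big)$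 for $k\geqslant1$. Then for all $k\in\mathbb{Z}_{\geqslant0}$ and all $x\in\mathbb{Z}_n$, $$\mathfrak{V}_{\mathcal{Q}}(k,x)=-v_\star(k,x),$$ where $\mathfrak{V}_{\mathcal{Q}}(k,x):=\inf_{\boldsymbol{x}\in\mathcal{S}(x)}\mathbb{P}\big(\exists\,t\in\{1,\dots,k\}:\boldsymbol{x}_t\in\mathcal{Q}\big)$ is the strong recurrence probability.
   Context: A stochastic digraph is a triple $(\mathbb{Z}_n,\{\mathcal{E}_s\}_{s=1}^h,\mu)$ with $\mathcal{E}_s\subset\mathbb{Z}_n\times\mathbb{Z}_n$ and $\mu$ the common distribution of an i.i.d. sequence $\boldsymbol{w}_k:\Omega\to\mathbb{Z}_h$, $k\in\mathbb{Z}_{\geqslant0}$, on a probability space $(\Omega,\mathcal{F},\mathbb{P})$. A stochastic directed path from $x$ is a map $\omega\mapsto\{\boldsymbol{x}_k(\omega)\}_{k=0}^{\boldsymbol{K}(\omega)}$ with $\boldsymbol{x}_0=x$, $\boldsymbol{x}_{k+1}(\omega)\in H(\boldsymbol{x}_k(\omega),\boldsymbol{w}_k(\omega))$ for all $\omega$ and $k<\boldsymbol{K}(\omega)$, and with $\boldsymbol{x}_{k+1}$ measurable with respect to $\sigma(\boldsymbol{w}_0,\dots,\boldsymbol{w}_k)$ for each $k$. It is maximal if it cannot be extended; $\mathcal{S}(x)$ is the set of maximal stochastic directed paths from $x$. $\mathbb{I}_{A}$ denotes the indicator function of the set $A$. *)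

(* Defs.v *)
From HB Require Import structures.
From mathcomp Require Import all_boot all_order all_algebra.
From mathcomp Require Import all_classical all_reals all_analysis.
Set Implicit Arguments. Unset Strict Implicit. Unset Printing Implicit Defensive.
Import Order.TTheory GRing.Theory Num.Theory.
Local Open Scope classical_set_scope.
Local Open Scope ring_scope.

(* Conventions: Z_n is rendered as 'I_n = {0,..,n-1}; Z_h as 'I_h.
   A stochastic digraph on 'I_n is given by edge sets E : 'I_h -> {set 'I_n * 'I_n}
   and a distribution mu : 'I_h -> R. *)

Definition outnb (m h : nat) (E : 'I_h -> {set 'I_m * 'I_m}) (x : 'I_m) (w : 'I_h)
  : {set 'I_m} := [set y | (x, y) \in E w].

Definition is_distr (R : realType) (h : nat) (mu : 'I_h -> R) : Prop :=
  (forall w, 0 <= mu w) /\ \sum_(w < h) mu w = 1.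

Definition iid_law (R : realType) (d : measure_display) (Omega : measurableType d)
  (P : probability Omega R) (h : nat) (mu : 'I_h -> R) (w : nat -> Omega -> 'I_h) : Prop :=
  (forall k a, measurable [set om | w k om = a]) /\
  (forall (s : seq nat) (j : nat -> 'I_h), uniq s ->
     P [set om | forall k, k \in s -> w k om = j k] = (\prod_(k <- s) mu (j k))%:E).

(* "k < K" where K = None stands for K = +infinity *)
Definition lt_len (k : nat) (K : option nat) : bool :=
  if K is Some m then (k < m)%N else true.

Definition gen_w (d : measure_display) (Omega : measurableType d) (h : nat)
  (w : nat -> Omega -> 'I_h) (k : nat) : set (set Omega) :=
  [set A | exists i a, (i <= k)%N /\ A = [set om | w i om = a]].

(* Maximal stochastic directed path from x0: x_k(om) for k <= K(om)
   (values of xs beyond K are irrelevant junk), K(om) = None means an infinite path. *)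
Definition max_stoch_path (d : measure_display) (Omega : measurableType d)
  (m h : nat) (E : 'I_h -> {set 'I_m * 'I_m}) (w : nat -> Omega -> 'I_h) (x0 : 'I_m)
  (xs : nat -> Omega -> 'I_m) (K : Omega -> option nat) : Prop :=
  (forall om, xs 0%N om = x0) /\
  (forall om k, lt_len k (K om) -> xs k.+1 om \in outnb E (xs k om) (w k om)) /\
  (forall k (y : 'I_m), <<s gen_w w k >> [set om | xs k.+1 om = y]) /\
  (forall om k, K om = Some k -> outnb E (xs k om) (w k om) = finset.set0).

Definition hit_event (d : measure_display) (Omega : measurableType d) (m : nat)
  (Q : {set 'I_m}) (k : nat) (xs : nat -> Omega -> 'I_m) (K : Omega -> option nat)
  : set Omega :=
  [set om | exists t, [/\ (1 <= t <= k)%N, (t <= odflt t (K om))%N & xs t om \in Q]].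

Definition strong_rec (R : realType) (d : measure_display) (Omega : measurableType d)
  (P : probability Omega R) (n h : nat) (E : 'I_h -> {set 'I_n * 'I_n})
  (w : nat -> Omega -> 'I_h) (Q : {set 'I_n}) (k : nat) (x : 'I_n) : \bar R :=
  ereal_inf [set P (hit_event Q k p.1 p.2) | p in
              [set p : (nat -> Omega -> 'I_n) * (Omega -> option nat)
                 | max_stoch_path E w x p.1 p.2]].

Definition emb (n : nat) (i : 'I_n) : 'I_n.+2 := inord i.
(* the new vertex "n+1" of the paper (value n here) and "n+2" (value n+1) *)
Definition vA (n : nat) : 'I_n.+2 := inord n.
Definition vB (n : nat) : 'I_n.+2 := ord_max.

Definition aug_edges (n h : nat) (E : 'I_h -> {set 'I_n * 'I_n}) (Q : {set 'I_n})
  (s : 'I_h) : {set 'I_n.+2 * 'I_n.+2} :=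
  [set (emb p.1, if p.2 \in Q then vA n else emb p.2) | p in E s]
    :|: [set (vA n, vB n); (vB n, vB n)].

Definition actions (n h : nat) (E : 'I_h -> {set 'I_n * 'I_n}) (Q : {set 'I_n})
  (i : 'I_n.+2) : {set {ffun 'I_h -> 'I_n.+2}} :=
  [set a : {ffun 'I_h -> 'I_n.+2} | [forall w, a w \in outnb (aug_edges E Q) i w]].

Definition trans_p (R : realType) (n h : nat) (mu : 'I_h -> R)
  (a : {ffun 'I_h -> 'I_n.+2}) (j : 'I_n.+2) : R :=
  \sum_(w < h | a w == j) mu w.

Definition reward (R : realType) (n : nat) (j : 'I_n.+2) : R :=
  - (j == vA n)%:R.

Definition qval (R : realType) (n h : nat) (mu : 'I_h -> R)
  (u : 'I_n.+2 -> R) (a : {ffun 'I_h -> 'I_n.+2}) : R :=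
  \sum_(j < n.+2) trans_p mu a j * (reward R j + u j).

Definition is_opt_value (R : realType) (n h : nat) (E : 'I_h -> {set 'I_n * 'I_n})
  (Q : {set 'I_n}) (mu : 'I_h -> R) (v : nat -> 'I_n.+2 -> R) : Prop :=
  (forall x, v 0%N x = 0) /\
  (forall k x,
     (exists2 a, a \in actions E Q x & v k.+1 x = qval mu (v k) a) /\
     (forall a, a \in actions E Q x -> qval mu (v k) a <= v k.+1 x)).

(* Main.v *)
Require Import Defs.
From HB Require Import structures.
From mathcomp Require Import all_boot all_order all_algebra.
From mathcomp Require Import all_classical all_reals all_analysis.
Import Order.TTheory GRing.Theory Num.Theory.
Local Open Scope classical_set_scope.
Local Open Scope ring_scope.
From mathcomp Require Import zify.
Set Implicit Arguments. Unset Strict Implicit. Unset Printing Implicit Defensive.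
Section Comb.
Variables (R : realType) (h n : nat) (mu : 'I_h -> R) (Q : {set 'I_n}).
Hypothesis mu_sum : \sum_(u < h) mu u = 1.

Fixpoint W (k : nat) (G : seq 'I_h -> bool) : R :=
  if k is k'.+1 then \sum_(u < h) mu u * W k' (fun s => G (u :: s)) else (G [::])%:R.

Lemma W_true k (G : seq 'I_h -> bool) : (forall s, G s) -> W k G = 1.
Proof.
elim: k G => [|k IH] G HG /=; first by rewrite HG.
by rewrite -mu_sum; apply: eq_bigr => u _; rewrite IH ?mulr1.
Qed.

Lemma W_orb k b G : W k (fun s => b || G s) = if b then 1 else W k G.
Proof. by case: b => //; apply: W_true. Qed.

Definition hitb k (F : seq 'I_h -> 'I_n) (s : seq 'I_h) : bool :=
  [exists t : 'I_k, F (take t.+1 s) \in Q].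

Lemma hitb_cons k F u s :
  hitb k.+1 F (u :: s) = (F [:: u] \in Q) || hitb k (fun s => F (u :: s)) s.
Proof.
apply/existsP/orP.
  case=> t; case: t => [[|t] Ht] /= HQ; first by left; rewrite take0 in HQ.
  right; apply/existsP; have Ht' : (t < k)%N by [].
  by exists (Ordinal Ht').
case=> [HQ|/existsP [t Ht]]; first by exists ord0; rewrite /= take0.
have Ht' : (t.+1 < k.+1)%N by rewrite ltnS.
by exists (Ordinal Ht').
Qed.

Lemma W_hit k F : W k.+1 (hitb k.+1 F) =
  \sum_(u < h) mu u * (if F [:: u] \in Q then 1 else W k (hitb k (fun s => F (u :: s)))).
Proof.
apply: eq_bigr => u _; congr (_ * _).
have -> : (fun s => hitb k.+1 F (u :: s)) =
   (fun s => (F [:: u] \in Q) || hitb k (fun s => F (u :: s)) s).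
  by apply: funext => s; rewrite hitb_cons.
exact: W_orb.
Qed.

End Comb.
Section Prob.
Variables (R : realType) (d : measure_display) (Omega : measurableType d)
  (P : probability Omega R) (h : nat) (mu : 'I_h -> R) (w : nat -> Omega -> 'I_h).
Hypothesis iid : iid_law P mu w.
Variable d0 : 'I_h.

Definition wl m om := [seq w i om | i <- iota 0 m].
Definition atom (p : seq 'I_h) := [set om | wl (size p) om = p].

Lemma wl_S m om : wl m.+1 om = rcons (wl m om) (w m om).
Proof. by rewrite /wl -addn1 iotaD map_cat cats1. Qed.

Lemma wl_add m k om : wl (m + k) om = wl m om ++ [seq w i om | i <- iota m k].
Proof. by rewrite /wl iotaD map_cat. Qed.

Lemma atom_rcons p u : atom (rcons p u) = atom p `&` [set om | w (size p) om = u].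
Proof.
apply/seteqP; split => om; rewrite /atom /= size_rcons wl_S.
  by move/eqP; rewrite eqseq_rcons => /andP [/eqP -> /eqP ->].
by case=> -> ->.
Qed.

Lemma atom_meas p : measurable (atom p).
Proof.
elim/last_ind: p => [|p u IH].
  have -> : atom [::] = setT by apply/seteqP; split.
  exact: measurableT.
rewrite atom_rcons; apply: measurableI => //; exact: iid.1.
Qed.

Lemma atom_P p : P (atom p) = (\prod_(u <- p) mu u)%:E.
Proof.
have -> : atom p = [set om | forall k, k \in iota 0 (size p) -> w k om = nth d0 p k].
  apply/seteqP; split => om /=.
    move=> Hp k; rewrite mem_iota add0n => Hk.
    by rewrite -[in RHS]Hp (nth_map 0) ?size_iota // nth_iota.
  move=> H; apply: (@eq_from_nth _ d0); rewrite ?size_map ?size_iota // => k Hk.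
  by rewrite (nth_map 0) ?size_iota // nth_iota // H // mem_iota.
rewrite iid.2; last exact: iota_uniq.
by rewrite (big_nth d0) /index_iota subn0.
Qed.

Lemma bigsetU_ordP (F : 'I_h -> set Omega) om :
  (\big[setU/set0]_(u < h) F u) om <-> exists u, F u om.
Proof.
rewrite -bigcup_seq; split => [[u _ Hu]|[u Hu]]; first by exists u.
by exists u => //=; rewrite mem_index_enum.
Qed.

Lemma P_gen k : forall p (G : seq 'I_h -> bool),
  measurable ([set om | G (wl (size p + k) om)] `&` atom p) /\
  P ([set om | G (wl (size p + k) om)] `&` atom p) =
    (\prod_(u <- p) mu u * W mu k (fun s => G (p ++ s)))%:E.
Proof.
elim: k => [|k IH] p G.
  rewrite addn0 /=.
  have [HG|HG] := boolP (G (p ++ [::])).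
    have -> : [set om | G (wl (size p) om)] `&` atom p = atom p.
      apply/seteqP; split => om; first by case.
      move=> Hom; rewrite cats0 in HG; rewrite /setI /=; split => //.
      by rewrite /atom /= in Hom; rewrite Hom.
    by rewrite atom_P mulr1; split => //; exact: atom_meas.
  have -> : [set om | G (wl (size p) om)] `&` atom p = set0.
    apply/seteqP; split => om //; case => /= HG' Hom.
    by move: HG; rewrite cats0 -Hom HG'.
  by rewrite measure0 mulr0; split.
have EU : [set om | G (wl (size p + k.+1) om)] `&` atom p =
    \big[setU/set0]_(u < h) ([set om | G (wl (size (rcons p u) + k) om)] `&` atom (rcons p u)).
  apply/seteqP; split => om.
    case=> HG Hom; apply/bigsetU_ordP; exists (w (size p) om).
    by rewrite atom_rcons size_rcons addSnnS.
  move/bigsetU_ordP => [u []]; rewrite atom_rcons size_rcons addSnnS.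
  by move=> HG [Hom _].
have mF u : measurable ([set om | G (wl (size (rcons p u) + k) om)] `&` atom (rcons p u)).
  exact: (IH (rcons p u) G).1.
have mU : measurable (\big[setU/set0]_(u < h)
    ([set om | G (wl (size (rcons p u) + k) om)] `&` atom (rcons p u))).
  by apply: bigsetU_measurable => u _; exact: mF.
rewrite EU; split => //.
rewrite measure_semi_additive_ord //; last first.
  apply/trivIsetP => u u' _ _ Huu'; apply/seteqP; split => om //.
  rewrite !atom_rcons => -[[_ [_ Hu]] [_ [_ Hu']]].
  by move: Huu'; rewrite -Hu -Hu' eqxx.
rewrite (eq_bigr _ (fun u _ => (IH (rcons p u) G).2)).
rewrite sumEFin /= mulr_sumr; congr (_%:E); apply: eq_bigr => u _.
rewrite big_rcons /= -mulrA; congr (_ * (_ * _)).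
by congr (W _ _ _); apply: funext => s; rewrite cat_rcons.
Qed.

Lemma P_event k (G : seq 'I_h -> bool) (A : set Omega) :
  (forall om, A om <-> G (wl k om)) -> P A = (W mu k G)%:E.
Proof.
move=> HA; have := (P_gen k [::] G).2; rewrite big_nil mul1r /=.
have -> : [set om | G (wl k om)] `&` atom [::] = A.
  apply/seteqP; split => om; first by case => H _; apply/HA.
  by move=> /HA H; split.
by move=> ->.
Qed.

End Prob.
Section Sat.
Variables (d : measure_display) (Omega : measurableType d) (h : nat)
  (w : nat -> Omega -> 'I_h).

Lemma gen_sat k A : <<s gen_w w k >> A ->
  forall om om', (forall i, (i <= k)%N -> w i om = w i om') -> (A om <-> A om').
Proof.
move=> HA om om' Hag.
pose S := [set B : set Omega | forall om om',
   (forall i, (i <= k)%N -> w i om = w i om') -> (B om <-> B om')].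
suff : <<s gen_w w k >> `<=` S by move/(_ A HA); apply.
apply: smallest_sub.
  split.
  - by move=> o o' _.
  - move=> B HB o o' Ho; rewrite /setD /=.
    by have := HB o o' Ho; tauto.
  - move=> B HB o o' Ho; split => -[j _ Hj]; exists j => //; by apply/(HB j o o' Ho).
move=> B [i [a [Hi ->]]] o o' Ho /=; rewrite Ho //.
Qed.

Lemma wl_agree t om om' : wl w t om = wl w t om' -> forall i, (i < t)%N -> w i om = w i om'.
Proof.
move=> H i Hi; have := congr1 (fun s => nth (w i om) s i) H.
by rewrite /wl /= !(nth_map 0) ?size_iota // nth_iota.
Qed.

Lemma size_wl t om : size (wl w t om) = t.
Proof. by rewrite size_map size_iota. Qed.

Variables (n : nat) (E : 'I_h -> {set 'I_n * 'I_n}) (x0 : 'I_n)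
  (xs : nat -> Omega -> 'I_n) (K : Omega -> option nat).
Hypothesis Hpath : max_stoch_path E w x0 xs K.

Lemma xs_dep t om om' : wl w t om = wl w t om' -> xs t om = xs t om'.
Proof.
case: Hpath => H0 [_ [Hm _]].
case: t => [|t] Hw; first by rewrite !H0.
have := gen_sat (Hm t (xs t.+1 om)) (om := om) (om' := om').
move=> /(_ _) [].
  by move=> i Hi; apply: (wl_agree Hw).
by move=> /(_ erefl).
Qed.

Lemma exists_link : exists F : seq 'I_h -> 'I_n, forall om t, xs t om = F (wl w t om).
Proof.
have : forall s : seq 'I_h, exists y, forall om, wl w (size s) om = s -> xs (size s) om = y.
  move=> s; case: (pselect (exists om, wl w (size s) om = s)) => [[om0 H0]|Hn].
    exists (xs (size s) om0) => om Hom; apply: xs_dep; by rewrite Hom H0.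
  by exists x0 => om Hom; exfalso; apply: Hn; exists om.
case/choice => F HF; exists F => om t.
have := HF (wl w t om) om; rewrite size_wl; by apply.
Qed.

End Sat.

Section HitLink.
Variables (R : realType) (d : measure_display) (Omega : measurableType d)
  (P : probability Omega R) (n h : nat) (mu : 'I_h -> R) (w : nat -> Omega -> 'I_h)
  (Q : {set 'I_n}).
Hypothesis iid : iid_law P mu w.
Variable d0 : 'I_h.

Lemma hit_link k (xs : nat -> Omega -> 'I_n) K F :
  (forall om t, xs t om = F (wl w t om)) -> (forall om, K om = None) ->
  P (hit_event Q k xs K) = (W mu k (hitb Q k F))%:E.
Proof.
move=> HF HK; apply: (P_event iid d0) => om; rewrite /hit_event /= HK /=.
split.
  case=> t [/andP [H1 H2] _ HQ]; apply/existsP.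
  have Ht : (t.-1 < k)%N by case: t H1 H2 {HQ}.
  exists (Ordinal Ht) => /=.
  rewrite /wl -map_take take_iota (minn_idPl _); last by case: t H1 H2 {HQ Ht}.
  by rewrite prednK // -HF.
case/existsP => t; rewrite /wl -map_take take_iota (minn_idPl _) // -/(wl w t.+1 om) -HF => HQ.
by exists t.+1; split => //; rewrite ltn_ord.
Qed.

End HitLink.
Section GenFun.
Variables (d : measure_display) (Omega : measurableType d) (h : nat)
  (w : nat -> Omega -> 'I_h).

Lemma bigsetU_condP (I : finType) (P : pred I) (F : I -> set Omega) om :
  (\big[setU/set0]_(i | P i) F i) om <-> exists i, P i /\ F i om.
Proof.
rewrite -bigcup_seq_cond; split => [[i /andP [_ Pi] Hi]|[i [Pi Hi]]]; first by exists i.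
by exists i => //=; rewrite mem_index_enum.
Qed.

Lemma gen_fun t (f : seq 'I_h -> bool) : <<s gen_w w t >> [set om | f (wl w t.+1 om)].
Proof.
pose G := gen_w w t.
have Hat : forall p, (size p <= t.+1)%N ->
    G.-sigma.-measurable (atom w p : set (g_sigma_algebraType G)).
  elim/last_ind => [|p u IH] Hp.
    have -> : atom w [::] = setT by apply/seteqP; split.
    exact: measurableT.
  rewrite atom_rcons; apply: measurableI.
    by apply: IH; rewrite size_rcons in Hp; apply: ltnW.
  apply: sub_gen_smallest; exists (size p), u; split => //.
  by rewrite size_rcons in Hp.
have -> : [set om | f (wl w t.+1 om)] =
    \big[setU/set0]_(p : t.+1.-tuple 'I_h | f p) atom w p.
  apply/seteqP; split => om.
    move=> Hf; apply/bigsetU_condP.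
    have Hs : size (wl w t.+1 om) == t.+1 by rewrite size_wl.
    exists (Tuple Hs) => /=; split => //.
    by change (wl w (size (wl w t.+1 om)) om = wl w t.+1 om); rewrite size_wl.
  move/bigsetU_condP => [p [Hf Hp]]; rewrite /atom /= size_tuple in Hp.
  by rewrite /= Hp.
change (G.-sigma.-measurable
  (\big[setU/set0]_(p : t.+1.-tuple 'I_h | f p) (atom w p : set (g_sigma_algebraType G)))).
apply: bigsetU_measurable => p _; apply: Hat; by rewrite size_tuple.
Qed.

End GenFun.
Section MDP.
Variables (R : realType) (n h : nat) (E : 'I_h -> {set 'I_n * 'I_n}) (Q : {set 'I_n})
  (mu : 'I_h -> R) (v : nat -> 'I_n.+2 -> R).
Hypotheses (mu_ge0 : forall u, 0 <= mu u) (mu_sum : \sum_(u < h) mu u = 1)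
  (Hv : is_opt_value E Q mu v).

Lemma emb_val (i : 'I_n) : nat_of_ord (emb i) = i.
Proof. rewrite /emb inordK //; have := ltn_ord i; lia. Qed.

Lemma vA_val : nat_of_ord (vA n) = n.
Proof. by rewrite /vA inordK //; lia. Qed.

Lemma emb_inj : injective (@emb n).
Proof. by move=> i j /(congr1 (@nat_of_ord _)); rewrite !emb_val => /val_inj. Qed.

Lemma emb_nA i : (emb i == vA n) = false.
Proof.
apply/negbTE/eqP => /(congr1 (@nat_of_ord _)); rewrite emb_val vA_val => H.
by have := ltn_ord i; rewrite H ltnn.
Qed.

Lemma emb_nB i : (emb i == vB n) = false.
Proof.
apply/negbTE/eqP => /(congr1 (@nat_of_ord _)); rewrite emb_val /= => H.
by have := ltn_ord i; rewrite H ltnNge leqnSn.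
Qed.

Lemma vA_nB : (vA n == vB n) = false.
Proof.
apply/negbTE/eqP => /(congr1 (@nat_of_ord _)); rewrite vA_val /= => H.
by move: (n_Sn n); rewrite {1}H.
Qed.

Lemma aug_embP z u b : b \in outnb (aug_edges E Q) (emb z) u <->
  exists y, (z, y) \in E u /\ b = (if y \in Q then vA n else emb y).
Proof.
rewrite /outnb inE /aug_edges finset.in_setU finset.in_set2 !xpair_eqE emb_nA emb_nB /= orbF.
split.
  by case/imsetP => [[p1 p2] Hp [/emb_inj -> ->]]; exists p2.
by move=> [y [Hy ->]]; apply/imsetP; exists (z, y).
Qed.

Lemma aug_AB (c : 'I_n.+2) u b : (c = vA n \/ c = vB n) ->
  b \in outnb (aug_edges E Q) c u -> b = vB n.
Proof.
move=> Hc; rewrite /outnb inE /aug_edges finset.in_setU finset.in_set2 !xpair_eqE.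
case/orP => [/imsetP [p _ [Hc' _]]|/orP [/andP [_ /eqP //]|/andP [_ /eqP //]]].
by case: Hc => Hc; move: (emb_nA p.1) (emb_nB p.1); rewrite -Hc' Hc eqxx.
Qed.

Lemma qvalE (u : 'I_n.+2 -> R) (a : {ffun 'I_h -> 'I_n.+2}) : qval mu u a = \sum_(w < h) mu w * (reward R (a w) + u (a w)).
Proof.
rewrite /qval /trans_p (partition_big a predT) //=.
apply: eq_bigr => j _; rewrite big_distrl /=.
by apply: eq_bigr => i /eqP ->.
Qed.

Lemma reward_emb (y : 'I_n) : reward R (emb y) = 0.
Proof. by rewrite /reward emb_nA oppr0. Qed.

Lemma reward_vA : reward R (vA n) = -1.
Proof. by rewrite /reward eqxx. Qed.

Lemma reward_vB : reward R (vB n) = 0.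
Proof. by rewrite /reward eq_sym vA_nB oppr0. Qed.

Lemma act_AB k c : (c = vA n \/ c = vB n) -> v k.+1 c = v k (vB n).
Proof.
move=> Hc; have [[a Ha ->] _] := Hv.2 k c.
have Hau : forall u, a u = vB n.
  by move=> u; apply: (aug_AB Hc); move: Ha; rewrite inE => /forallP; apply.
rewrite qvalE; under eq_bigr => u _ do rewrite Hau reward_vB add0r.
by rewrite -big_distrl /= mu_sum mul1r.
Qed.

Lemma vB0 k : v k (vB n) = 0.
Proof. by elim: k => [|k IH]; [exact: Hv.1 | rewrite act_AB ?IH //; right]. Qed.

Lemma vA0 k : v k (vA n) = 0.
Proof. by case: k => [|k]; [exact: Hv.1 | rewrite act_AB ?vB0 //; left]. Qed.

Definition validF k (F : seq 'I_h -> 'I_n) := forall p u, (size p < k)%N ->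
  (forall z, z \in rcons p u -> 0 < mu z) -> F (rcons p u) \in outnb E (F p) u.

Lemma lower k : forall x F, F [::] = x -> validF k F ->
  - v k (emb x) <= W mu k (hitb Q k F).
Proof.
elim: k => [|k IH] x F Fx HF.
  rewrite Hv.1 oppr0 /=.
  have -> : hitb Q 0 F [::] = false by apply/existsP => -[[]].
  by [].
rewrite W_hit //.
have [[a0 Ha0 _] _] := Hv.2 0 (emb x).
pose a := [ffun u => if 0 < mu u then (if F [:: u] \in Q then vA n else emb (F [:: u]))
                     else a0 u].
have Ha : a \in actions E Q (emb x).
  rewrite inE; apply/forallP => u; rewrite ffunE.
  case: ifP => Hu.
    apply/aug_embP; exists (F [:: u]); split => //.
    have := HF [::] u erefl; rewrite Fx /outnb inE; apply.
    by move=> z; rewrite inE => /eqP ->.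
  by move: Ha0; rewrite inE => /forallP; apply.
have := (Hv.2 k (emb x)).2 a Ha; rewrite -lerN2 => /le_trans; apply.
rewrite qvalE -sumrN; apply: ler_sum => u _; rewrite -mulrN ffunE.
have [Hu|Hu] := boolP (0 < mu u); last first.
  have -> : mu u = 0 by apply/eqP; rewrite eq_le mu_ge0 andbT leNgt.
  by rewrite !mul0r.
apply: ler_wpM2l => //.
case: ifP => HQ; first by rewrite reward_vA vA0 addr0 opprK.
rewrite reward_emb add0r; apply: IH => // p u' Hp Hpos.
have := HF (u :: p) u' Hp; rewrite rcons_cons; apply.
move=> z; rewrite inE => /orP [/eqP -> //|].
by move=> Hz; apply: Hpos.
Qed.


Variables (d0 : 'I_h) (pol : nat -> 'I_n -> {ffun 'I_h -> 'I_n.+2})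
  (nx : nat -> 'I_n -> 'I_h -> 'I_n).
Hypotheses (Hpol : forall j z, v j.+1 (emb z) = qval mu (v j) (pol j z))
  (Hnx : forall j z u, (if nx j z u \in Q then vA n else emb (nx j z u)) = pol j z u).

Fixpoint traj k x (ws : nat -> 'I_h) t : 'I_n :=
  if t is t'.+1 then nx (k - t'.+1) (traj k x ws t') (ws t') else x.

Lemma traj_ext k x ws ws' t : (forall i, (i < t)%N -> ws i = ws' i) ->
  traj k x ws t = traj k x ws' t.
Proof.
elim: t => [//|t IH] H /=; rewrite IH ?H // => i Hi; apply: H; exact: ltnW.
Qed.

Lemma traj_shift k x ws t :
  traj k.+1 x ws t.+1 = traj k (nx k x (ws 0%N)) (fun i => ws i.+1) t.
Proof.
elim: t => [|t IH] /=; first by rewrite subn1.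
by rewrite -IH /= subSS.
Qed.

Definition PF k x (s : seq 'I_h) := traj k x (fun i => nth d0 s i) (size s).

Lemma upper k : forall x, W mu k (hitb Q k (PF k x)) = - v k (emb x).
Proof.
elim: k => [|k IH] x.
  rewrite Hv.1 oppr0 /=.
  have -> : hitb Q 0 (PF 0 x) [::] = false by apply/existsP => -[[]].
  by [].
rewrite W_hit // Hpol qvalE -sumrN; apply: eq_bigr => u _.
have E1 : PF k.+1 x [:: u] = nx k x u by rewrite /PF /= subn1.
have E2 : (fun s => PF k.+1 x (u :: s)) = PF k (nx k x u).
  apply: funext => s; rewrite /PF /=; exact: traj_shift.
rewrite E1 E2 IH -Hnx -mulrN; congr (_ * _).
case: ifP => _; first by rewrite reward_vA vA0 addr0 opprK.
by rewrite reward_emb add0r.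
Qed.

End MDP.
Theorem proposition2 (R : realType) (d : measure_display) (Omega : measurableType d)
  (P : probability Omega R) (n h : nat) (E : 'I_h -> {set 'I_n * 'I_n})
  (mu : 'I_h -> R) (w : nat -> Omega -> 'I_h) (Q : {set 'I_n})
  (v : nat -> 'I_n.+2 -> R) :
  is_distr mu ->
  iid_law P mu w ->
  (forall (i : 'I_n) (s : 'I_h), 0 < mu s -> outnb E i s != finset.set0) ->
  is_opt_value E Q mu v ->
  forall (k : nat) (x : 'I_n), strong_rec P E w Q k x = (- v k (emb x))%:E.
Proof.
move=> [mu_ge0 mu_sum] Hiid _ Hv k x.
have [d0 _ | H0] := pickP (@predT 'I_h); last first.
  exfalso; move: mu_sum; rewrite big_pred0 // => /eqP; by rewrite eq_sym oner_eq0.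
have Hne : forall (i : 'I_n) u, exists y, (i, y) \in E u.
  move=> i u; have [[a Ha _] _] := Hv.2 0%N (emb i).
  move: Ha; rewrite inE => /forallP /(_ u) /aug_embP [y [Hy _]]; by exists y.
have KNone : forall xs K, max_stoch_path E w x xs K -> forall om, K om = None.
  move=> xs K [_ [_ [_ Hmax]]] om; case HK: (K om) => [m|] //.
  have := Hmax om m HK; have [y Hy] := Hne (xs m om) (w m om).
  move/setP => /(_ y); by rewrite /outnb !inE Hy.
have : forall jz : nat * 'I_n, exists a, a \in actions E Q (emb jz.2) /\
    v jz.1.+1 (emb jz.2) = qval mu (v jz.1) a.
  move=> [j z]; have [[a Ha Hq] _] := Hv.2 j (emb z); by exists a.
case/choice => polf Hpolf.
pose pol j z := polf (j, z).
have : forall t : nat * 'I_n * 'I_h, exists y, y \in outnb E t.1.2 t.2 /\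
    (if y \in Q then vA n else emb y) = pol t.1.1 t.1.2 t.2.
  move=> [[j z] u]; have [Ha _] := Hpolf (j, z).
  move: Ha; rewrite inE => /forallP /(_ u) /aug_embP [y [Hy Hyp]].
  by exists y; rewrite /outnb inE Hy Hyp.
case/choice => nxf Hnxf.
pose nx j z u := nxf (j, z, u).
have Hpol : forall j z, v j.+1 (emb z) = qval mu (v j) (pol j z).
  by move=> j z; have [_ ->] := Hpolf (j, z).
have Hnx : forall j z u, (if nx j z u \in Q then vA n else emb (nx j z u)) = pol j z u.
  by move=> j z u; have [_ ->] := Hnxf (j, z, u).
have Hnx1 : forall j z u, nx j z u \in outnb E z u.
  by move=> j z u; have [-> _] := Hnxf (j, z, u).
pose xs t om := traj nx k x (fun i => w i om) t.
have Hlink : forall om t, xs t om = PF d0 nx k x (wl w t om).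
  move=> om t; rewrite /PF size_wl; apply: traj_ext => i Hi.
  by rewrite /wl (nth_map 0) ?size_iota // nth_iota.
have Hopt : max_stoch_path E w x xs (fun=> None).
  split; first by [].
  split; first by move=> om t _; exact: Hnx1.
  split => // t y.
  have -> : [set om | xs t.+1 om = y] = [set om | PF d0 nx k x (wl w t.+1 om) == y].
    by apply/seteqP; split => om /=; rewrite Hlink => /eqP.
  exact: (@gen_fun _ _ _ w t (fun s => PF d0 nx k x s == y)).
apply/le_anti/andP; split.
  apply: ereal_inf_lbound; exists (xs, fun=> None) => //=.
  rewrite (hit_link Q Hiid d0 k Hlink) //.
  by rewrite (upper mu_sum Hv d0 Hpol Hnx).
apply: le_ereal_inf_tmp => _ [[ys K] Hp <-] /=; move: Hp => /= Hp.
have [F HF] := exists_link Hp.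
rewrite (hit_link Q Hiid d0 k HF (KNone _ _ Hp)) lee_fin.
apply: (lower mu_ge0 mu_sum Hv).
  by rewrite -(HF point 0%N); case: Hp.
move=> p u Hs Hpos.
have Hpr : (0 < \prod_(z <- rcons p u) mu z).
  by rewrite big_seq_cond; apply: prodr_gt0 => z /andP [Hz _]; apply: Hpos.
have [om Hom] : exists om, atom w (rcons p u) om.
  case: (pselect (exists om, atom w (rcons p u) om)) => // Hn.
  have E0 : atom w (rcons p u) = set0.
    by apply/seteqP; split => om // Hom; apply: Hn; exists om.
  have := atom_P Hiid d0 (rcons p u); rewrite E0 measure0 => /(congr1 fine) /= H.
  by move: Hpr; rewrite -H ltxx.
move: (Hom); rewrite atom_rcons => -[Hp1 Hp2].
have E1 : F (rcons p u) = ys (size p).+1 om.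
  by rewrite (HF om); congr F; move: Hom; rewrite /atom /= size_rcons.
have E2 : F p = ys (size p) om by rewrite (HF om) Hp1.
rewrite E1 E2 -Hp2; case: (Hp) => _ [Hstep _]; apply: Hstep.
by rewrite (KNone _ _ Hp).
Qed.
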